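(* Consider the FlexPD-G iterates described in the context with integer $T\ge1$, and let $c_1=1+\alpha\rho(B)$. Choose $\eta_2>0$ and $\eta_3>\rho(B)$ with $\eta_2+\eta_3<2m-\rho(B)$. If $0<\alpha<\frac{\eta_2}{L^2}$ and $0<\beta<\frac{2m-(\eta_2+\eta_3)-\rho(B)}{\rho(A'A)}$, then there exists $\delta_G>0$ such that for all $k\ge0$, \[c_1\|x^{k+1,T}-x^*\|^2+\frac{\alpha}{\beta}\|\lambda^{k+1}-\lambda^*\|^2\le\frac{1}{1+\delta_G}\Big(\|x^{k+1,T-1}-x^*\|^2+\frac{\alpha}{\beta}\|\lambda^k-\lambda^*\|^2+\alpha\rho(B)\|x^k-x^*\|^2\Big).\]
   Context: Setting: $n$ agents are connected by a connected undirected graph with edge set $\mathcal E$, $\epsilon=|\mathcal E|$. For $x\in\mathbb R^n$ let $f(x)=\sum_{i=1}^n f_i(x_i)$, where each $f_i:\mathbb R\to\mathbb R$ is twice differentiable with $m\le f_i''\le L$ for constants $0<m\le L$; $\nabla f(x)=(f_1'(x_1),\dots,f_n'(x_n))'$. $A\in\mathbb R^{\epsilon\times n}$ is the edge–node incidence matrix (null space spanned by the all-ones vector). $B\in\mathbb R^{n\times n}$ is symmetric positive semidefinite with the same null space as $A$, off-diagonal entries nonzero only on edges, and $\rho(B)<m$. $x^*$ is the unique minimizer of $f$ subject to $Ax=0$ and $\lambda^*$ a Lagrange multiplier with $\nabla f(x^* )+A'\lambda^*=0$, $Ax^*=0$, $Bx^*=0$, chosen in the column space of $A$. FlexPD-G: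 given $\alpha,\beta>0$, $T\ge1$, $x^0$ arbitrary, $\lambda^0=0$; for $k\ge0$: $x^{k+1,0}=x^k$; for $t=1,\dots,T$, $x^{k+1,t}=x^{k+1,t-1}-\alpha\nabla f(x^{k+1,t-1})-\alpha A'\lambda^k-\alpha Bx^k$; then $x^{k+1}=x^{k+1,T}$, $\lambda^{k+1}=\lambda^k+\beta Ax^{k+1}$. Notation: $\rho(S)$ largest eigenvalue of symmetric $S$; $\|\cdot\|$ Euclidean norm. *)

(* Defs.v *)
From HB Require Import structures.
From mathcomp Require Import all_boot all_order all_algebra.
From mathcomp Require Import all_classical all_reals all_analysis.
Set Implicit Arguments. Unset Strict Implicit. Unset Printing Implicit Defensive.
Import Order.TTheory GRing.Theory Num.Theory.
Local Open Scope ring_scope.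

Section FlexPD.
Variable R : realType.

Definition sqnorm (p : nat) (v : 'cV[R]_p) : R := \sum_(i < p) (v i 0) ^+ 2.

Definition is_rho (p : nat) (S : 'M[R]_p) (r : R) : Prop :=
  eigenvalue S r /\ (forall a, eigenvalue S a -> a <= r).

(* Undirected graph on 'I_n given by an edge list E : 'I_eps -> 'I_n * 'I_n
   (each edge listed once, with an arbitrary orientation). *)
Definition adj (n eps : nat) (E : 'I_eps -> 'I_n * 'I_n) : rel 'I_n :=
  fun i j => [exists e, (E e == (i, j)) || (E e == (j, i))].

Definition simple_edges (n eps : nat) (E : 'I_eps -> 'I_n * 'I_n) : Prop :=
  (forall e, (E e).1 != (E e).2) /\
  (forall e e', e != e' -> (E e != E e') /\ (E e != ((E e').2, (E e').1))).

Definition graph_connected (n eps : nat) (E : 'I_eps -> 'I_n * 'I_n) : Prop :=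
  forall i j, connect (adj E) i j.

Definition incidence (n eps : nat) (E : 'I_eps -> 'I_n * 'I_n) : 'M[R]_(eps, n) :=
  \matrix_(e < eps, k < n) ((k == (E e).1)%:R - (k == (E e).2)%:R).

Definition fsum (n : nat) (f : 'I_n -> R -> R) (x : 'cV[R]_n) : R :=
  \sum_(i < n) f i (x i 0).

Definition grad (n : nat) (f : 'I_n -> R -> R) (x : 'cV[R]_n) : 'cV[R]_n :=
  \col_(i < n) derive1 (f i) (x i 0).

Definition inner_step (n eps : nat) (f : 'I_n -> R -> R) (A : 'M[R]_(eps, n))
  (B : 'M[R]_n) (alpha : R) (lam : 'cV[R]_eps) (xk : 'cV[R]_n) (y : 'cV[R]_n)
  : 'cV[R]_n :=
  y - alpha *: grad f y - alpha *: (A^T *m lam) - alpha *: (B *m xk).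

Fixpoint flexpd_state (n eps : nat) (f : 'I_n -> R -> R) (A : 'M[R]_(eps, n))
  (B : 'M[R]_n) (alpha beta : R) (T : nat) (x0 : 'cV[R]_n) (k : nat)
  : 'cV[R]_n * 'cV[R]_eps :=
  match k with
  | 0 => (x0, 0)
  | k'.+1 =>
      let: (xk, lk) := flexpd_state f A B alpha beta T x0 k' in
      let xn := iter T (inner_step f A B alpha lk xk) xk in
      (xn, lk + beta *: (A *m xn))
  end.

Definition flexpd_x n eps f A B alpha beta T x0 k : 'cV[R]_n :=
  (@flexpd_state n eps f A B alpha beta T x0 k).1.
Definition flexpd_lam n eps f A B alpha beta T x0 k : 'cV[R]_eps :=
  (@flexpd_state n eps f A B alpha beta T x0 k).2.

(* inner iterate x^{k+1,t} *)
Definition flexpd_inner n eps f A B alpha beta T x0 k t : 'cV[R]_n :=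
  iter t (inner_step f A B alpha (@flexpd_lam n eps f A B alpha beta T x0 k)
                                 (@flexpd_x n eps f A B alpha beta T x0 k))
         (@flexpd_x n eps f A B alpha beta T x0 k).

End FlexPD.

(* Main.v *)
Require Import Defs.
From HB Require Import structures.
From mathcomp Require Import all_boot all_order all_algebra.
From mathcomp Require Import all_classical all_reals all_analysis.
Import Order.TTheory GRing.Theory Num.Theory.
Local Open Scope ring_scope.
From mathcomp Require Import ring lra.
Set Implicit Arguments. Unset Strict Implicit. Unset Printing Implicit Defensive.

Definition dotv (R : realType) p (a b : 'cV[R]_p) : R := \sum_(i < p) a i 0 * b i 0.

Lemma sqnorm_dot (R : realType) p (v : 'cV[R]_p) : sqnorm v = dotv v v.
Proof. by apply: eq_bigr => i _; rewrite expr2. Qed.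

Lemma dotvC (R : realType) p (a b : 'cV[R]_p) : dotv a b = dotv b a.
Proof. by apply: eq_bigr => i _; rewrite mulrC. Qed.

Lemma dotvDl (R : realType) p (a b c : 'cV[R]_p) : dotv (a + b) c = dotv a c + dotv b c.
Proof. by rewrite /dotv -big_split; apply: eq_bigr => i _; rewrite mxE mulrDl. Qed.

Lemma dotvDr (R : realType) p (a b c : 'cV[R]_p) : dotv c (a + b) = dotv c a + dotv c b.
Proof. by rewrite dotvC dotvDl !(dotvC c). Qed.

Lemma dotvZl (R : realType) p (k : R) (a b : 'cV[R]_p) : dotv (k *: a) b = k * dotv a b.
Proof. by rewrite /dotv mulr_sumr; apply: eq_bigr => i _; rewrite mxE mulrA. Qed.

Lemma dotvZr (R : realType) p (k : R) (a b : 'cV[R]_p) : dotv b (k *: a) = k * dotv b a.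
Proof. by rewrite dotvC dotvZl dotvC. Qed.

Lemma dotvNl (R : realType) p (a b : 'cV[R]_p) : dotv (- a) b = - dotv a b.
Proof. by rewrite -scaleN1r dotvZl mulN1r. Qed.

Lemma dotvNr (R : realType) p (a b : 'cV[R]_p) : dotv b (- a) = - dotv b a.
Proof. by rewrite dotvC dotvNl dotvC. Qed.

Lemma dotvBl (R : realType) p (a b c : 'cV[R]_p) : dotv (a - b) c = dotv a c - dotv b c.
Proof. by rewrite dotvDl dotvNl. Qed.

Lemma dotvBr (R : realType) p (a b c : 'cV[R]_p) : dotv c (a - b) = dotv c a - dotv c b.
Proof. by rewrite dotvDr dotvNr. Qed.

Lemma dotv0l (R : realType) p (b : 'cV[R]_p) : dotv 0 b = 0.
Proof. by rewrite /dotv big1 // => i _; rewrite mxE mul0r. Qed.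

Lemma dotv_mul (R : realType) p q (M : 'M[R]_(p, q)) (a : 'cV[R]_p) (b : 'cV[R]_q) :
  dotv a (M *m b) = dotv (M^T *m a) b.
Proof.
rewrite /dotv.
under eq_bigr => i _ do rewrite mxE big_distrr /=.
rewrite exchange_big /=; apply: eq_bigr => j _.
rewrite mxE big_distrl /=; apply: eq_bigr => i _.
by rewrite !mxE; ring.
Qed.

Lemma sqnorm_ge0 (R : realType) p (v : 'cV[R]_p) : 0 <= sqnorm v.
Proof. by apply: sumr_ge0 => i _; apply: sqr_ge0. Qed.

Lemma sqnormD (R : realType) p (a b : 'cV[R]_p) :
  sqnorm (a + b) = sqnorm a + 2 * dotv a b + sqnorm b.
Proof. rewrite !sqnorm_dot dotvDl !dotvDr (dotvC b a); ring. Qed.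

Lemma sqnormZ (R : realType) p (k : R) (a : 'cV[R]_p) :
  sqnorm (k *: a) = k ^+ 2 * sqnorm a.
Proof. rewrite !sqnorm_dot dotvZl dotvZr; ring. Qed.

Lemma sqnormN (R : realType) p (a : 'cV[R]_p) : sqnorm (- a) = sqnorm a.
Proof. by rewrite !sqnorm_dot dotvNl dotvNr opprK. Qed.

Lemma dotv_le (R : realType) p (a b : 'cV[R]_p) :
  2 * dotv a b <= sqnorm a + sqnorm b.
Proof.
have := sqnorm_ge0 (a - b); rewrite sqnormD sqnormN dotvNr; lra.
Qed.

Lemma sqnorm_add2 (R : realType) p (a b : 'cV[R]_p) :
  sqnorm (a + b) <= 2 * sqnorm a + 2 * sqnorm b.
Proof. rewrite sqnormD; have := dotv_le a b; lra. Qed.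

Lemma coord_le (R : realType) p (v : 'cV[R]_p) i : (v i 0) ^+ 2 <= sqnorm v.
Proof.
rewrite /sqnorm (bigD1 i) //= lerDl; apply: sumr_ge0 => j _; apply: sqr_ge0.
Qed.

Definition crude (R : realType) p (M : 'M[R]_p) : R := \sum_(i < p) \sum_(j < p) `|M i j|.

Lemma crude_ge0 (R : realType) p (M : 'M[R]_p) : 0 <= crude M.
Proof. by apply: sumr_ge0 => i _; apply: sumr_ge0 => j _. Qed.

Lemma qf_crude (R : realType) p (M : 'M[R]_p) (x : 'cV[R]_p) :
  `|dotv x (M *m x)| <= crude M * sqnorm x.
Proof.
rewrite /dotv /crude mulr_suml.
apply: (le_trans (ler_norm_sum _ _ _)); apply: ler_sum => i _.
rewrite mxE big_distrr mulr_suml /=.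
apply: (le_trans (ler_norm_sum _ _ _)); apply: ler_sum => j _.
rewrite !normrM mulrCA ler_wpM2l //.
have hi := coord_le x i; have hj := coord_le x j.
have ha : `|x i 0| ^+ 2 = (x i 0) ^+ 2 by rewrite real_normK ?num_real.
have hb : `|x j 0| ^+ 2 = (x j 0) ^+ 2 by rewrite real_normK ?num_real.
have := sqr_ge0 (`|x i 0| - `|x j 0|).
rewrite sqrrB -ha -hb in hi hj *.
move: (`|x i 0|) (`|x j 0|) hi hj => a b hi hj h.
rewrite mulr2n in h. lra.
Qed.


Definition qf (R : realType) p (M : 'M[R]_p) (x : 'cV[R]_p) : R := dotv x (M *m x).

Lemma dotv_sym (R : realType) p (M : 'M[R]_p) (y z : 'cV[R]_p) : M^T = M ->
  dotv z (M *m y) = dotv y (M *m z).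
Proof. by move=> hM; rewrite dotv_mul hM dotvC. Qed.

Lemma qf_expand (R : realType) p (M : 'M[R]_p) (y z : 'cV[R]_p) (t : R) : M^T = M ->
  qf M (z + t *: y) = qf M z + 2 * t * dotv y (M *m z) + t ^+ 2 * qf M y.
Proof.
move=> hM; rewrite /qf mulmxDr -scalemxAr dotvDl !dotvDr !dotvZl !dotvZr.
rewrite (dotv_sym y z hM); ring.
Qed.

Lemma psd_cs (R : realType) p (M : 'M[R]_p) (y z : 'cV[R]_p) : M^T = M ->
  (forall x, 0 <= qf M x) -> (dotv y (M *m z)) ^+ 2 <= qf M y * qf M z.
Proof.
move=> hM hpsd; set b := dotv y (M *m z).
have hy := hpsd y; have hz := hpsd z.
have [qy0|qypos] := eqVneq (qf M y) 0.
  have [b0|bn0] := eqVneq b 0; first by rewrite b0 qy0 expr0n /= mul0r.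
  have := hpsd (z + (- (qf M z + 1) / (2 * b)) *: y).
  rewrite qf_expand // qy0 -/b mulr0 addr0.
  have -> : 2 * (- (qf M z + 1) / (2 * b)) * b = - (qf M z + 1).
    by field; rewrite bn0.
  lra.
have qyp : 0 < qf M y by rewrite lt_neqAle eq_sym qypos hy.
have := hpsd (z + (- b / qf M y) *: y).
rewrite qf_expand // -/b.
have -> : qf M z + 2 * (- b / qf M y) * b + (- b / qf M y) ^+ 2 * qf M y
   = qf M z - b ^+ 2 / qf M y.
  by field; rewrite qypos.
rewrite subr_ge0 ler_pdivrMr // mulrC //.
Qed.

Lemma psd_bound (R : realType) p (M : 'M[R]_p) (z : 'cV[R]_p) : M^T = M ->
  (forall x, 0 <= qf M x) -> sqnorm (M *m z) <= crude M * qf M z.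
Proof.
move=> hM hpsd; set y := M *m z.
have h1 := psd_cs y z hM hpsd.
rewrite -/y -sqnorm_dot in h1.
have h2 : qf M y <= crude M * sqnorm y.
  by apply: le_trans (qf_crude M y); apply: ler_norm.
have hz := hpsd z; have hc := crude_ge0 M; have hsy := sqnorm_ge0 y.
have [s0|sn0] := eqVneq (sqnorm y) 0; first by rewrite s0 mulr_ge0.
have sp : 0 < sqnorm y by rewrite lt_neqAle eq_sym sn0 hsy.
have h3 : sqnorm y ^+ 2 <= crude M * sqnorm y * qf M z.
  apply: le_trans h1 _; rewrite ler_wpM2r //.
rewrite expr2 (mulrC (crude M)) -mulrA ler_pM2l // in h3.
Qed.

Lemma normM_crude (R : realType) p q (N : 'M[R]_(p, q)) (x : 'cV[R]_q) :
  sqnorm (N *m x) <= crude (N^T *m N) * sqnorm x.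
Proof.
have -> : sqnorm (N *m x) = qf (N^T *m N) x.
  by rewrite /qf sqnorm_dot -mulmxA dotv_mul dotvC.
by apply: le_trans (qf_crude _ x); apply: ler_norm.
Qed.


Lemma qf_abs_le (R : realType) p (S : 'M[R]_p) v : qf S v <= crude S * sqnorm v.
Proof. by apply: le_trans (qf_crude S v); apply: ler_norm. Qed.

Lemma qf_ge_crude (R : realType) p (S : 'M[R]_p) v : - (crude S * sqnorm v) <= qf S v.
Proof. by rewrite lerNl; apply: le_trans (qf_crude S v); rewrite -normrN; apply: ler_norm. Qed.

Lemma rayleigh (R : realType) p (S : 'M[R]_p) r : S^T = S -> is_rho S r ->
  forall v, qf S v <= r * sqnorm v.
Proof.
move=> hS [hev hmax].
case: p S hS hev hmax => [|p] S hS hev hmax v.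
  by rewrite /qf /dotv /sqnorm !big_ord0 mulr0.
set K := crude S.
have hK : 0 <= K by apply: crude_ge0.
pose Q : set R := fun t : R => exists v : 'cV[R]_p.+1, t * sqnorm v < qf S v.
have ubQ : forall t, Q t -> t <= K.
  move=> t [w hw]; have h1 := qf_abs_le S w; have hs := sqnorm_ge0 w.
  have [s0|sn0] := eqVneq (sqnorm w) 0.
    by move: hw h1; rewrite s0 !mulr0 => hw h1; move: hw; rewrite ltNge h1.
  have sp : 0 < sqnorm w by rewrite lt_neqAle eq_sym sn0 hs.
  have : t * sqnorm w < K * sqnorm w by exact: lt_le_trans hw h1.
  by rewrite ltr_pM2r // => /ltW.
have neQ : Q (- K - 1).
  exists (const_mx 1).
  have hs : sqnorm (const_mx 1 : 'cV[R]_p.+1) = p.+1%:R.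
    rewrite /sqnorm (eq_bigr (fun _ => 1)); last by move=> i _; rewrite mxE expr1n.
    by rewrite sumr_const card_ord.
  have := qf_ge_crude S (const_mx 1); rewrite -/K hs.
  have : 0 < p.+1%:R :> R by rewrite ltr0n.
  move=> hp h; nra.
have hsup : has_sup Q by split; [exists (- K - 1) | exists K; move=> t /ubQ].
set M := sup Q.
have hi : forall w, qf S w <= M * sqnorm w.
  move=> w; rewrite leNgt; apply/negP => hw.
  have h1 := qf_abs_le S w; have hs := sqnorm_ge0 w.
  have [s0|sn0] := eqVneq (sqnorm w) 0.
    by move: hw h1; rewrite s0 !mulr0 => hw h1; move: hw; rewrite ltNge h1.
  have sp : 0 < sqnorm w by rewrite lt_neqAle eq_sym sn0 hs.
  have hlt : M < qf S w / sqnorm w by rewrite ltr_pdivlMr.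
  have : Q ((M + qf S w / sqnorm w) / 2).
    exists w.
    have -> : (M + qf S w / sqnorm w) / 2 * sqnorm w
              = (M * sqnorm w + qf S w) / 2 by field; rewrite sn0.
    lra.
  move=> /(sup_upper_bound hsup); rewrite -/M; lra.
have hev' : eigenvalue S M.
  apply: contraT => hne; exfalso.
  set C := M%:M - S.
  have hCt : C^T = C by rewrite /C linearB /= tr_scalar_mx hS.
  have qfC : forall x, qf C x = M * sqnorm x - qf S x.
    by move=> x; rewrite /qf /C mulmxBl mul_scalar_mx dotvBr dotvZr sqnorm_dot.
  have Cpsd : forall x, 0 <= qf C x by move=> x; rewrite qfC subr_ge0 hi.
  have Cunit : C \in unitmx.
    rewrite unitmxE unitfE; apply/negP => /det0P [w wn0 wC].
    apply: (negP hne); apply/eigenvalueP; exists w => //.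
    move: wC; rewrite /C mulmxBr mul_mx_scalar => /eqP; rewrite subr_eq0 => /eqP.
    by move=> ->.
  set K1 := crude ((invmx C)^T *m invmx C).
  have hK1 : 0 <= K1 by apply: crude_ge0.
  have hcC : 0 <= crude C by apply: crude_ge0.
  have hb : forall x, sqnorm x <= (K1 * crude C + 1) * qf C x.
    move=> x.
    have e1 : sqnorm x <= K1 * sqnorm (C *m x).
      have := normM_crude (invmx C) (C *m x).
      by rewrite mulKmx.
    have e2 := psd_bound x hCt Cpsd.
    have := Cpsd x; have := sqnorm_ge0 (C *m x).
    move=> h3 h4.
    have : K1 * sqnorm (C *m x) <= K1 * (crude C * qf C x) by rewrite ler_wpM2l.
    nra.
  set c := (K1 * crude C + 1)^-1.
  have cpos : 0 < c by rewrite invr_gt0; nra.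
  have [t [w hw] ht] := sup_adherent cpos hsup.
  rewrite -/M in ht.
  have := hb w; rewrite qfC.
  have hs := sqnorm_ge0 w.
  have hc1 : c * (K1 * crude C + 1) = 1 by rewrite /c mulVf //; apply/lt0r_neq0; nra.
  move=> h.
  have h' : c * sqnorm w <= M * sqnorm w - qf S w.
    have : c * sqnorm w <= c * ((K1 * crude C + 1) * (M * sqnorm w - qf S w)).
      by rewrite ler_wpM2l // ltW.
    by rewrite mulrA hc1 mul1r.
  have : (M - c) * sqnorm w <= t * sqnorm w by rewrite ler_wpM2r // ltW.
  lra.
have hMr := hmax _ hev'.
apply: le_trans (hi v) _; rewrite ler_wpM2r //; exact: sqnorm_ge0.
Qed.


Lemma aux_tr (R : realType) q (G Z : 'M[R]_q) (v : 'cV[R]_q) : G^T = G ->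
  v^T *m G *m Z *m G = v^T *m G -> G *m (Z^T *m (G *m v)) = G *m v.
Proof.
move=> hG h1; have := congr1 trmx h1; rewrite !trmx_mul trmxK hG !mulmxA.
by move=> ->.
Qed.

Lemma pinv_bound (R : realType) p q (A : 'M[R]_(p, q)) (v : 'cV[R]_q) :
  sqnorm (A *m v) <= crude ((pinvmx (A^T *m A))^T) * sqnorm (A^T *m (A *m v)).
Proof.
set G := A^T *m A; set Z := pinvmx G.
have hG : G^T = G by rewrite /G trmx_mul trmxK.
have hy : (v^T *m G <= G)%MS by apply: submxMl.
have h1 := mulmxKpV hy.
have h2 : G *m (Z^T *m (G *m v)) = G *m v.
  exact: aux_tr.
have -> : sqnorm (A *m v) = dotv v (G *m v).
  by rewrite sqnorm_dot dotv_mul /G mulmxA dotvC.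
rewrite -h2 (dotv_sym _ _ hG) -mulmxA.
have -> : A^T *m (A *m v) = G *m v by rewrite /G mulmxA.
by rewrite dotvC; apply: qf_abs_le.
Qed.

Lemma grad_diff (R : realType) (phi : R -> R) (m L : R) :
  (forall x, derivable phi x 1) ->
  (forall x, m <= derive1 phi x <= L) -> m <= L ->
  forall a b, exists h, m <= h <= L /\ phi a - phi b = h * (a - b).
Proof.
move=> hd hb hmL.
have key : forall a b, b < a -> exists h, m <= h <= L /\ phi a - phi b = h * (a - b).
  move=> a b ba.
  have [c _ hc] := @MVT R phi (derive1 phi) b a ba
    (fun x _ => ltac:(rewrite derive1E; exact: derivableP (hd x)))
    (derivable_within_continuous (fun x _ => hd x)).
  by exists (derive1 phi c); split; [exact: hb|].
move=> a b; have [ab|ba|ab] := ltgtP a b.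
- have [h [hh e]] := key b a ab; exists h; split => //.
  have -> : phi a - phi b = - (phi b - phi a) by ring.
  by rewrite e; ring.
- exact: key.
- by exists m; rewrite lexx hmL ab !subrr mulr0.
Qed.


Definition K3c (R : realType) (alpha L eta2 : R) : R :=
  (2 + 4 * L ^+ 2) + (1 + 2 * alpha ^+ 2 * L ^+ 2 + 2 * L ^+ 2 + 4 * alpha ^+ 2 * L ^+ 4)
                      / (alpha * (eta2 - alpha * L ^+ 2)).

Lemma K3c_gt0 (R : realType) (alpha L eta2 : R) : 0 < alpha -> alpha * L ^+ 2 < eta2 ->
  0 < K3c alpha L eta2.
Proof.
move=> ha hl; rewrite /K3c; apply: ltr_pwDl.
  have := sqr_ge0 L; lra.
apply: divr_ge0; last by apply: mulr_ge0; lra.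
have := sqr_ge0 L; have := sqr_ge0 alpha; have := sqr_ge0 (L ^+ 2).
rewrite -exprM /=; move=> h1 h2 h3.
apply: addr_ge0; last by apply: mulr_ge0 => //; apply: mulr_ge0 => //; lra.
apply: addr_ge0; last by lra.
apply: addr_ge0; first lra.
by apply: mulr_ge0 => //; apply: mulr_ge0 => //; lra.
Qed.

Lemma coord_ineq (R : realType) (m L alpha eta2 h e d : R) :
  0 < m -> m <= h -> h <= L -> 0 < alpha -> alpha * L ^+ 2 < eta2 ->
  d ^+ 2 + (h * (e + d)) ^+ 2 + e ^+ 2 <=
  K3c alpha L eta2 * (d ^+ 2 + 2 * alpha * (h * (e + d)) * e - alpha * (2 * m - eta2) * e ^+ 2).
Proof.
move=> hm hmh hhL ha hl.
set eps := eta2 - alpha * L ^+ 2.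
have heps : 0 < eps by rewrite /eps; lra.
set p := d + alpha * h * e.
have hh2 : h ^+ 2 <= L ^+ 2 by rewrite ler_sqr ?nnegrE //; lra.
have hX : p ^+ 2 + alpha * eps * e ^+ 2 <=
          d ^+ 2 + 2 * alpha * (h * (e + d)) * e - alpha * (2 * m - eta2) * e ^+ 2.
  have -> : d ^+ 2 + 2 * alpha * (h * (e + d)) * e - alpha * (2 * m - eta2) * e ^+ 2
          = p ^+ 2 + alpha * (eta2 - alpha * h ^+ 2 + 2 * (h - m)) * e ^+ 2.
    by rewrite /p; ring.
  rewrite lerD2l ler_wpM2r ?sqr_ge0 // ler_wpM2l ?(ltW ha) //.
  rewrite /eps; have : alpha * h ^+ 2 <= alpha * L ^+ 2 by rewrite ler_wpM2l //; lra.
  lra.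
have hd : d ^+ 2 <= 2 * p ^+ 2 + 2 * alpha ^+ 2 * L ^+ 2 * e ^+ 2.
  have -> : d = p - alpha * h * e by rewrite /p; ring.
  have := sqr_ge0 (p + alpha * h * e).
  have : alpha ^+ 2 * h ^+ 2 * e ^+ 2 <= alpha ^+ 2 * L ^+ 2 * e ^+ 2.
    by rewrite ler_wpM2r ?sqr_ge0 // ler_wpM2l ?sqr_ge0.
  move=> h1 h2.
  have -> : (p - alpha * h * e) ^+ 2 = 2 * p ^+ 2 + 2 * alpha ^+ 2 * h ^+ 2 * e ^+ 2 - (p + alpha * h * e) ^+ 2 by ring.
  lra.
have hs : (h * (e + d)) ^+ 2 <= 2 * L ^+ 2 * (e ^+ 2 + d ^+ 2).
  rewrite exprMn.
  have : (e + d) ^+ 2 <= 2 * (e ^+ 2 + d ^+ 2).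
    have := sqr_ge0 (e - d).
    have -> : (e - d) ^+ 2 = 2 * (e ^+ 2 + d ^+ 2) - (e + d) ^+ 2 by ring.
    lra.
  move=> h1; have h2 := ler_wpM2l (sqr_ge0 h) h1.
  have hed : 0 <= 2 * (e ^+ 2 + d ^+ 2) by have := sqr_ge0 e; have := sqr_ge0 d; lra.
  have h3 : h ^+ 2 * (2 * (e ^+ 2 + d ^+ 2)) <= L ^+ 2 * (2 * (e ^+ 2 + d ^+ 2)).
    by rewrite ler_wpM2r.
  lra.
have hK : d ^+ 2 + (h * (e + d)) ^+ 2 + e ^+ 2 <=
          (2 + 4 * L ^+ 2) * p ^+ 2
          + (1 + 2 * alpha ^+ 2 * L ^+ 2 + 2 * L ^+ 2 + 4 * alpha ^+ 2 * L ^+ 4) * e ^+ 2.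
  have hL4 : L ^+ 4 = L ^+ 2 * L ^+ 2 by rewrite -exprD.
  have : 2 * L ^+ 2 * d ^+ 2 <= 2 * L ^+ 2 * (2 * p ^+ 2 + 2 * alpha ^+ 2 * L ^+ 2 * e ^+ 2).
    by rewrite ler_wpM2l //; apply: mulr_ge0 => //; apply: sqr_ge0.
  rewrite hL4; move=> h1.
  have e1 : 2 * L ^+ 2 * (2 * p ^+ 2 + 2 * alpha ^+ 2 * L ^+ 2 * e ^+ 2)
          = 4 * L ^+ 2 * p ^+ 2 + 4 * alpha ^+ 2 * (L ^+ 2 * L ^+ 2) * e ^+ 2 by ring.
  rewrite e1 in h1.
  have e2 : 2 * L ^+ 2 * (e ^+ 2 + d ^+ 2) = 2 * L ^+ 2 * e ^+ 2 + 2 * L ^+ 2 * d ^+ 2 by ring.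
  rewrite e2 in hs.
  have e3 : (2 + 4 * L ^+ 2) * p ^+ 2 +
    (1 + 2 * alpha ^+ 2 * L ^+ 2 + 2 * L ^+ 2 + 4 * alpha ^+ 2 * (L ^+ 2 * L ^+ 2)) * e ^+ 2
    = 2 * p ^+ 2 + 4 * L ^+ 2 * p ^+ 2 + e ^+ 2 + 2 * alpha ^+ 2 * L ^+ 2 * e ^+ 2
      + 2 * L ^+ 2 * e ^+ 2 + 4 * alpha ^+ 2 * (L ^+ 2 * L ^+ 2) * e ^+ 2 by ring.
  rewrite e3; lra.
apply: le_trans hK _.
set c1 := 2 + 4 * L ^+ 2.
set c2 := 1 + 2 * alpha ^+ 2 * L ^+ 2 + 2 * L ^+ 2 + 4 * alpha ^+ 2 * L ^+ 4.
have hc1 : 0 <= c1 by rewrite /c1; have := sqr_ge0 L; lra.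
have hc2 : 0 <= c2.
  rewrite /c2; have := sqr_ge0 L; have := sqr_ge0 alpha; have := sqr_ge0 (L ^+ 2).
  rewrite -exprM /=; move=> h1 h2 h3.
  have : 0 <= alpha ^+ 2 * L ^+ 2 by apply: mulr_ge0.
  have : 0 <= alpha ^+ 2 * L ^+ 4 by apply: mulr_ge0.
  lra.
have hae : 0 < alpha * eps by apply: mulr_gt0.
have hp2 := sqr_ge0 p; have he2 := sqr_ge0 e.
have : K3c alpha L eta2 * (p ^+ 2 + alpha * eps * e ^+ 2)
       <= K3c alpha L eta2 * (d ^+ 2 + 2 * alpha * (h * (e + d)) * e - alpha * (2 * m - eta2) * e ^+ 2).
  by rewrite ler_wpM2l // ltW // K3c_gt0.
apply: le_trans.
rewrite /K3c -/eps -/c1 -/c2.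
have q2 : c1 * (alpha * eps * e ^+ 2) >= 0 by apply: mulr_ge0 => //; apply: mulr_ge0 => //; apply: ltW.
have q3 : c2 / (alpha * eps) * p ^+ 2 >= 0 by apply: mulr_ge0 => //; apply: divr_ge0 => //; apply: ltW.
have q4 : c2 / (alpha * eps) * (alpha * eps * e ^+ 2) = c2 * e ^+ 2.
  by field; rewrite (gt_eqF heps) (gt_eqF ha).
move: q3 q4; set k := c2 / (alpha * eps) => q3 q4.
lra.
Qed.


Lemma sqnorm4 (R : realType) p (a b c d : 'cV[R]_p) :
  sqnorm (a - b - c + d) <= 4 * (sqnorm a + sqnorm b + sqnorm c + sqnorm d).
Proof.
have -> : a - b - c + d = (a - b) + (- c + d) by rewrite !addrA.
apply: le_trans (sqnorm_add2 _ _) _.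
have h1 := sqnorm_add2 a (- b); have h2 := sqnorm_add2 (- c) d.
rewrite !sqnormN in h1 h2; lra.
Qed.

Definition K4c (R : realType) n (B : 'M[R]_n) (alpha L eta2 : R) : R :=
  K3c alpha L eta2 + (crude B + 1) / alpha.

Definition K5c (R : realType) n eps (A : 'M[R]_(eps, n)) (B : 'M[R]_n) (alpha beta rho : R) : R :=
  `|1 + alpha * rho| + 1 + 4 * crude ((pinvmx (A^T *m A))^T)
     * (1 + alpha ^+ 2 + alpha ^+ 2 * crude ((B + beta *: (A^T *m A))^T *m (B + beta *: (A^T *m A))))
     / (alpha * beta).

Definition deltac (R : realType) n eps (A : 'M[R]_(eps, n)) (B : 'M[R]_n) (alpha beta rho L eta2 : R) : R :=
  (K4c B alpha L eta2 * K5c A B alpha beta rho)^-1.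

Lemma deltac_gt0 (R : realType) n eps (A : 'M[R]_(eps, n)) (B : 'M[R]_n) (alpha beta rho L eta2 : R) :
  0 < alpha -> 0 < beta -> alpha * L ^+ 2 < eta2 -> 0 < deltac A B alpha beta rho L eta2.
Proof.
move=> ha hb hl; rewrite /deltac invr_gt0; apply: mulr_gt0.
  rewrite /K4c; have := K3c_gt0 ha hl.
  have : 0 <= (crude B + 1) / alpha.
    by apply: divr_ge0; [apply: addr_ge0 => //; apply: crude_ge0 | apply: ltW].
  lra.
rewrite /K5c.
set k := crude ((B + beta *: (A^T *m A))^T *m (B + beta *: (A^T *m A))).
have hk : 0 <= k by apply: crude_ge0.
have : 0 <= 4 * crude ((pinvmx (A^T *m A))^T) * (1 + alpha ^+ 2 + alpha ^+ 2 * k) / (alpha * beta).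
  apply: divr_ge0; last by apply: ltW; apply: mulr_gt0.
  apply: mulr_ge0; first by apply: mulr_ge0 => //; apply: crude_ge0.
  have := sqr_ge0 alpha => h1.
  have : 0 <= alpha ^+ 2 * k by apply: mulr_ge0.
  lra.
have := normr_ge0 (1 + alpha * rho).
lra.
Qed.


Lemma main_ineq (R : realType) n eps (A : 'M[R]_(eps, n)) (B : 'M[R]_n)
  (rho P alpha beta m L eta2 : R)
  (u w g e : 'cV[R]_n) (mu mu' : 'cV[R]_eps) (v' : 'cV[R]_n) (h : 'I_n -> R) :
  B^T = B -> (forall x, 0 <= qf B x) -> (forall x, qf B x <= rho * sqnorm x) ->
  (forall x, sqnorm (A *m x) <= P * sqnorm x) ->
  0 < alpha -> 0 < beta -> beta * P < 2 * m - eta2 - 2 * rho ->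
  alpha * L ^+ 2 < eta2 -> 0 < m ->
  (forall i, m <= h i <= L) -> (forall i, g i 0 = h i * u i 0) ->
  e = u - alpha *: g - alpha *: (A^T *m mu) - alpha *: (B *m w) ->
  mu' = mu + beta *: (A *m e) -> mu' = A *m v' ->
  deltac A B alpha beta rho L eta2 *
    ((1 + alpha * rho) * sqnorm e + alpha / beta * sqnorm mu')
  <= (sqnorm u + alpha / beta * sqnorm mu + alpha * rho * sqnorm w)
     - ((1 + alpha * rho) * sqnorm e + alpha / beta * sqnorm mu').
Proof.
move=> hBt hBpsd hBrho hAP ha hb hbP hl hm hh hg he hmu hv.
set d := u - e.
set D := (sqnorm u + alpha / beta * sqnorm mu + alpha * rho * sqnorm w)
     - ((1 + alpha * rho) * sqnorm e + alpha / beta * sqnorm mu').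
set LHS := (1 + alpha * rho) * sqnorm e + alpha / beta * sqnorm mu'.
have hd : d = alpha *: (g + A^T *m mu + B *m w).
  rewrite /d he; apply/matrixP => i j; rewrite !mxE; ring.
have hu : u = e + d by rewrite /d addrC subrK.
have hsu : sqnorm u = sqnorm e + 2 * alpha * (dotv e g + dotv e (A^T *m mu) + dotv e (B *m w))
                      + sqnorm d.
  rewrite {1}hu sqnormD {1}hd dotvZr !dotvDr; ring.
have hsmu : sqnorm mu' = sqnorm mu + 2 * beta * dotv e (A^T *m mu) + beta ^+ 2 * sqnorm (A *m e).
  rewrite hmu sqnormD dotvZr sqnormZ dotv_mul dotvC; ring.
have hDid : D = sqnorm d + 2 * alpha * dotv g e + 2 * alpha * dotv e (B *m w)
                + alpha * rho * sqnorm w - alpha * rho * sqnorm e - alpha * beta * sqnorm (A *m e).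
  rewrite /D hsu hsmu (dotvC g e); field; exact: lt0r_neq0.
set K3 := K3c alpha L eta2.
have hK3 : 0 < K3 by apply: K3c_gt0.
set X := sqnorm d + 2 * alpha * dotv g e - alpha * (2 * m - eta2) * sqnorm e.
have hX : sqnorm d + sqnorm g + sqnorm e <= K3 * X.
  have hc : forall i : 'I_n, (d i 0) ^+ 2 + (g i 0) ^+ 2 + (e i 0) ^+ 2 <=
      K3 * (d i 0) ^+ 2 + (K3 * (2 * alpha)) * (g i 0 * e i 0)
      - (K3 * (alpha * (2 * m - eta2))) * (e i 0) ^+ 2.
    move=> i; have [hm1 hm2] := andP (hh i).
    have := coord_ineq (e i 0) (d i 0) hm hm1 hm2 ha hl.
    have -> : h i * (e i 0 + d i 0) = g i 0.
      by rewrite hg /d !mxE; ring.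
    rewrite -/K3 => H; apply: le_trans H _; rewrite le_eqVlt; apply/orP; left; apply/eqP; ring.
  have : \sum_(i < n) ((d i 0) ^+ 2 + (g i 0) ^+ 2 + (e i 0) ^+ 2) <=
     \sum_(i < n) (K3 * (d i 0) ^+ 2 + (K3 * (2 * alpha)) * (g i 0 * e i 0)
      - (K3 * (alpha * (2 * m - eta2))) * (e i 0) ^+ 2).
    by apply: ler_sum => i _; exact: hc i.
  rewrite !big_split /= ?sumrN -!mulr_sumr.
  rewrite /X /sqnorm /dotv => H; apply: le_trans H _; rewrite le_eqVlt; apply/orP; left; apply/eqP; ring.
have hX0 : 0 <= X.
  have : 0 <= sqnorm d + sqnorm g + sqnorm e.
    by have := sqnorm_ge0 d; have := sqnorm_ge0 g; have := sqnorm_ge0 e; lra.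
  move=> h0; have := le_trans h0 hX; rewrite pmulr_rge0 //.
set z := w + e.
have hz : qf B z = qf B w + 2 * dotv e (B *m w) + qf B e.
  by rewrite /z -[e]scale1r qf_expand // scale1r; ring.
have hD1 : X + alpha * qf B z <= D.
  rewrite hDid /X.
  have q1 := hBrho w; have q2 := hBrho e; have q3 := hAP e.
  have q4 : beta * sqnorm (A *m e) <= beta * (P * sqnorm e) by rewrite ler_wpM2l // ltW.
  have q5 : 0 <= (2 * m - eta2 - 2 * rho - beta * P) * sqnorm e.
    by apply: mulr_ge0; [lra | apply: sqnorm_ge0].
  have q6 : 0 <= (2 * m - eta2) * sqnorm e - qf B w - qf B e + rho * sqnorm w
                - rho * sqnorm e - beta * sqnorm (A *m e) by lra.
  have q7 := mulr_ge0 (ltW ha) q6.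
  rewrite hz; lra.
set KB := crude B.
have hKB : 0 <= KB by apply: crude_ge0.
set Y := sqnorm d + sqnorm g + sqnorm e + sqnorm (B *m z).
have hY : Y <= K4c B alpha L eta2 * D.
  rewrite /K4c -/K3 -/KB mulrDl.
  have hqz := hBpsd z.
  have haq : 0 <= alpha * qf B z := mulr_ge0 (ltW ha) hqz.
  have y1 : K3 * X <= K3 * D.
    by apply: (ler_wpM2l (ltW hK3)); apply: (le_trans _ hD1); rewrite lerDl.
  have y2 : (KB + 1) / alpha * (alpha * qf B z) <= (KB + 1) / alpha * D.
    have hk : 0 <= (KB + 1) / alpha by apply: divr_ge0; [lra | apply: ltW].
    apply: (ler_wpM2l hk); lra.
  have y3 : (KB + 1) / alpha * (alpha * qf B z) = (KB + 1) * qf B z.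
    by field; apply: lt0r_neq0.
  have y4 := psd_bound z hBt hBpsd.
  rewrite -/KB in y4.
  rewrite /Y; lra.
set KZ := crude ((pinvmx (A^T *m A))^T).
set N := B + beta *: (A^T *m A).
set KN := crude (N^T *m N).
have hKZ : 0 <= KZ by apply: crude_ge0.
have hKN : 0 <= KN by apply: crude_ge0.
have hmu1 : sqnorm mu' <= KZ * sqnorm (A^T *m mu') by rewrite hv; apply: pinv_bound.
have hvec : alpha *: (A^T *m mu') = d - alpha *: g - alpha *: (B *m z) + alpha *: (N *m e).
  rewrite hmu mulmxDr -scalemxAr /z mulmxDr /N mulmxDl -scalemxAl -mulmxA.
  move: (A^T *m mu) (A^T *m (A *m e)) (B *m w) (B *m e) he => a1 a2 a3 a4 he'.
  rewrite /d he'; apply/matrixP => i j; rewrite !mxE; ring.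
have hmu2 : alpha ^+ 2 * sqnorm (A^T *m mu') <=
    4 * (sqnorm d + alpha ^+ 2 * sqnorm g + alpha ^+ 2 * sqnorm (B *m z)
         + alpha ^+ 2 * (KN * sqnorm e)).
  rewrite -sqnormZ hvec; apply: le_trans (sqnorm4 _ _ _ _) _.
  rewrite !sqnormZ; have := normM_crude N e; rewrite -/KN => H.
  have : alpha ^+ 2 * sqnorm (N *m e) <= alpha ^+ 2 * (KN * sqnorm e).
    by rewrite ler_wpM2l // sqr_ge0.
  lra.
have hY0 : forall t : R, 0 <= t -> t * sqnorm e <= t * Y.
  move=> t ht; rewrite ler_wpM2l // /Y.
  by have := sqnorm_ge0 d; have := sqnorm_ge0 g; have := sqnorm_ge0 (B *m z); lra.
have hL : LHS <= K5c A B alpha beta rho * Y.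
  rewrite /LHS /K5c -/KZ -/N -/KN.
  have l1 : (1 + alpha * rho) * sqnorm e <= `|1 + alpha * rho| * Y.
    apply: le_trans (hY0 _ (normr_ge0 _)).
    by rewrite ler_wpM2r ?sqnorm_ge0 // ler_norm.
  have hab : 0 < alpha * beta by apply: mulr_gt0.
  have l2 : alpha / beta * sqnorm mu' <= KZ / (alpha * beta) * (alpha ^+ 2 * sqnorm (A^T *m mu')).
    have -> : KZ / (alpha * beta) * (alpha ^+ 2 * sqnorm (A^T *m mu'))
            = alpha / beta * (KZ * sqnorm (A^T *m mu')).
      by field; rewrite (gt_eqF ha) (gt_eqF hb).
    by rewrite ler_wpM2l // divr_ge0 // ltW.
  have hKZab : 0 <= KZ / (alpha * beta) by rewrite divr_ge0 // ltW.
  have l3 := ler_wpM2l hKZab hmu2.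
  have hsq := sqr_ge0 alpha.
  have l4 : 4 * (sqnorm d + alpha ^+ 2 * sqnorm g + alpha ^+ 2 * sqnorm (B *m z)
         + alpha ^+ 2 * (KN * sqnorm e)) <= 4 * (1 + alpha ^+ 2 + alpha ^+ 2 * KN) * Y.
    have := sqnorm_ge0 d; have := sqnorm_ge0 g; have := sqnorm_ge0 (B *m z); have := sqnorm_ge0 e.
    move=> s1 s2 s3 s4.
    have t1 : alpha ^+ 2 * (sqnorm g + sqnorm (B *m z)) <= alpha ^+ 2 * Y.
      by rewrite ler_wpM2l // /Y; lra.
    have t3 : alpha ^+ 2 * KN * sqnorm e <= alpha ^+ 2 * KN * Y.
      by apply: hY0; apply: mulr_ge0.
    have t4 : sqnorm d <= Y by rewrite /Y; lra.
    lra.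
  have l5 := ler_wpM2l hKZab l4.
  have hY1 : 0 <= Y.
    by rewrite /Y; have := sqnorm_ge0 d; have := sqnorm_ge0 g; have := sqnorm_ge0 (B *m z);
       have := sqnorm_ge0 e; lra.
  have -> : (`|1 + alpha * rho| + 1 + 4 * KZ * (1 + alpha ^+ 2 + alpha ^+ 2 * KN) / (alpha * beta)) * Y
          = `|1 + alpha * rho| * Y + Y + KZ / (alpha * beta) * (4 * (1 + alpha ^+ 2 + alpha ^+ 2 * KN) * Y).
    by field; rewrite (gt_eqF ha) (gt_eqF hb).
  lra.
have hK4 : 0 < K4c B alpha L eta2.
  rewrite /K4c -/K3; have : 0 <= (crude B + 1) / alpha.
    by apply: divr_ge0; [apply: addr_ge0 => //; apply: crude_ge0 | apply: ltW].
  lra.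
have hdel := deltac_gt0 A B rho ha hb hl.
have hLD : LHS <= (K4c B alpha L eta2 * K5c A B alpha beta rho) * D.
  have hK5 : 0 <= K5c A B alpha beta rho.
    have := hdel; rewrite /deltac invr_gt0 pmulr_rgt0 // => /ltW //.
  apply: le_trans hL _; rewrite [K4c _ _ _ _ * _]mulrC -mulrA.
  by apply: (ler_wpM2l hK5).
have := ler_wpM2l (ltW hdel) hLD.
rewrite /deltac mulrA mulVf ?mul1r //.
apply: lt0r_neq0; rewrite -invr_gt0; exact: hdel.
Qed.


Lemma step_lam (R : realType) n eps (f : 'I_n -> R -> R) (A : 'M[R]_(eps, n)) B alpha beta T x0 k :
  flexpd_lam f A B alpha beta T x0 k.+1 =
  flexpd_lam f A B alpha beta T x0 k + beta *: (A *m flexpd_inner f A B alpha beta T x0 k T).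
Proof.
rewrite /flexpd_lam /flexpd_inner /flexpd_x /=.
rewrite /flexpd_lam.
destruct (flexpd_state f A B alpha beta T x0 k) as [a b]; reflexivity.
Qed.

Lemma lam_range (R : realType) n eps (f : 'I_n -> R -> R) (A : 'M[R]_(eps, n)) B alpha beta T x0 k :
  exists v, flexpd_lam f A B alpha beta T x0 k = A *m v.
Proof.
elim: k => [|k [v hv]]; first by exists 0; rewrite mulmx0.
exists (v + beta *: flexpd_inner f A B alpha beta T x0 k T).
by rewrite step_lam hv mulmxDr scalemxAr.
Qed.

Lemma qf_tr (R : realType) p (M : 'M[R]_p) (x : 'cV[R]_p) : (x^T *m M *m x) 0 0 = qf M x.
Proof.
rewrite -mulmxA mxE /qf /dotv; apply: eq_bigr => i _; by rewrite mxE.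
Qed.

Lemma iter_pred (X : Type) (T : nat) (g : X -> X) (x : X) :
  (1 <= T)%N -> iter T g x = g (iter T.-1 g x).
Proof. by case: T. Qed.

Unset Implicit Arguments. Set Strict Implicit.

Theorem theorem3p12 (R : realType) (n eps : nat)
  (E : 'I_eps -> 'I_n * 'I_n) (f : 'I_n -> R -> R) (m L : R)
  (B : 'M[R]_n) (rhoB rhoAA : R)
  (xstar : 'cV[R]_n) (lamstar : 'cV[R]_eps)
  (alpha beta eta2 eta3 : R) (T : nat) (x0 : 'cV[R]_n) :
  simple_edges E -> graph_connected E ->
  0 < m -> m <= L ->
  (forall i x, derivable (f i) x 1 /\ derivable (derive1 (f i)) x 1) ->
  (forall i x, m <= derive1 (derive1 (f i)) x <= L) ->
  B^T = B ->
  (forall v : 'cV[R]_n, 0 <= (v^T *m B *m v) 0 0) ->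
  (forall v : 'cV[R]_n, B *m v = 0 <-> incidence R E *m v = 0) ->
  (forall i j, i != j -> B i j != 0 -> adj E i j) ->
  is_rho B rhoB -> rhoB < m ->
  is_rho ((incidence R E)^T *m incidence R E) rhoAA ->
  (* x* is the unique minimizer of f subject to A x = 0 *)
  incidence R E *m xstar = 0 ->
  (forall x, incidence R E *m x = 0 -> fsum f xstar <= fsum f x) ->
  (forall y, incidence R E *m y = 0 ->
     (forall x, incidence R E *m x = 0 -> fsum f y <= fsum f x) -> y = xstar) ->
  (* lambda* is a Lagrange multiplier in the column space of A *)
  grad f xstar + (incidence R E)^T *m lamstar = 0 ->
  B *m xstar = 0 ->
  (exists v : 'cV[R]_n, lamstar = incidence R E *m v) ->
  (1 <= T)%N ->
  0 < eta2 -> rhoB < eta3 -> eta2 + eta3 < 2 * m - rhoB ->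
  0 < alpha -> alpha < eta2 / L ^+ 2 ->
  0 < beta -> beta < (2 * m - (eta2 + eta3) - rhoB) / rhoAA ->
  exists deltaG : R, 0 < deltaG /\
    forall k : nat,
      let A := incidence R E in
      let xk := flexpd_x f A B alpha beta T x0 k in
      let lk := flexpd_lam f A B alpha beta T x0 k in
      let lk1 := flexpd_lam f A B alpha beta T x0 k.+1 in
      let xT := flexpd_inner f A B alpha beta T x0 k T in
      let xTm1 := flexpd_inner f A B alpha beta T x0 k T.-1 in
      (1 + alpha * rhoB) * sqnorm (xT - xstar)
        + alpha / beta * sqnorm (lk1 - lamstar)
      <= (1 + deltaG)^-1 *
         (sqnorm (xTm1 - xstar) + alpha / beta * sqnorm (lk - lamstar)
          + alpha * rhoB * sqnorm (xk - xstar)).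
Proof.
move=> _ _ hm hmL hder hbd hBt hBpsd0 _ _ hrB _ hrAA hAx _ _ hopt hBx [vs hvs] hT
  heta2 heta3 hsum ha haL hb hbe.
set A := incidence R E.
have hnum : 0 < 2 * m - (eta2 + eta3) - rhoB by lra.
have hP : 0 < rhoAA.
  rewrite ltNge; apply/negP => hP0.
  have : (2 * m - (eta2 + eta3) - rhoB) / rhoAA <= 0.
    by apply: mulr_ge0_le0; [apply: ltW | rewrite invr_le0].
  lra.
have hbP : beta * rhoAA < 2 * m - eta2 - 2 * rhoB.
  move: hbe; rewrite ltr_pdivlMr // => h; lra.
have hL2 : 0 < L ^+ 2 by apply: exprn_gt0; lra.
have hl : alpha * L ^+ 2 < eta2 by move: haL; rewrite ltr_pdivlMr.
have hBpsd : forall x, 0 <= qf B x by move=> x; rewrite -qf_tr.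
have hBrho := rayleigh hBt hrB.
have hAP : forall x, sqnorm (A *m x) <= rhoAA * sqnorm x.
  move=> x.
  have hsym : (A^T *m A)^T = A^T *m A by rewrite trmx_mul trmxK.
  have -> : sqnorm (A *m x) = qf (A^T *m A) x.
    by rewrite /qf sqnorm_dot -mulmxA dotv_mul dotvC.
  exact: rayleigh hsym hrAA x.
set delta := deltac A B alpha beta rhoB L eta2.
exists delta; split; first exact: deltac_gt0.
move=> k; cbv zeta.
set xk := flexpd_x f A B alpha beta T x0 k.
set lk := flexpd_lam f A B alpha beta T x0 k.
set lk1 := flexpd_lam f A B alpha beta T x0 k.+1.
set xT := flexpd_inner f A B alpha beta T x0 k T.
set xTm1 := flexpd_inner f A B alpha beta T x0 k T.-1.
set u := xTm1 - xstar.
set w := xk - xstar.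
set e := xT - xstar.
set mu := lk - lamstar.
set mu' := lk1 - lamstar.
set g := grad f xTm1 - grad f xstar.
have hxT : xT = inner_step f A B alpha lk xk xTm1.
  by rewrite /xT /xTm1 /flexpd_inner (iter_pred _ _ hT).
have hlk1 : lk1 = lk + beta *: (A *m xT) by rewrite /lk1 step_lam.
have [v1 hv1] := lam_range f A B alpha beta T x0 k.+1.
pose h := fun i : 'I_n => if u i 0 == 0 then m else g i 0 / u i 0.
have hgi : forall i, exists2 c, m <= c <= L & g i 0 = c * u i 0.
  move=> i.
  have [c [hc1 hc2]] := grad_diff (fun x => (hder i x).2) (hbd i) hmL (xTm1 i 0) (xstar i 0).
  exists c => //; by rewrite /g /u !mxE hc2.
have hh : forall i, m <= h i <= L.
  move=> i; rewrite /h; case: eqP => hu0; first by rewrite lexx hmL.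
  have [c hc1 ->] := hgi i; rewrite mulfK //; exact/eqP.
have hg : forall i, g i 0 = h i * u i 0.
  move=> i; rewrite /h; case: eqP => hu0.
    by have [c _ ->] := hgi i; rewrite hu0 !mulr0.
  by rewrite divfK //; exact/eqP.
have he : e = u - alpha *: g - alpha *: (A^T *m mu) - alpha *: (B *m w).
  rewrite /e hxT /inner_step /u /g /mu /w !mulmxBr hBx.
  move/matrixP: hopt => hopt; rewrite -/A in hopt.
  apply/matrixP => i j; rewrite (ord1 j); have := hopt i 0; rewrite !mxE => hij.
  move: hij; set s := \sum_(j < eps) A^T i j * lamstar j 0 => hij.
  move: hij; set t := derive1 (f i) (xstar i 0) => hij.
  move/eqP: hij; rewrite addr_eq0 => /eqP ->; ring.
rewrite -/A in hAx hvs.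
have hmu : mu' = mu + beta *: (A *m e).
  by rewrite /mu' /mu /e hlk1 mulmxBr hAx subr0 addrAC.
have hv : mu' = A *m (v1 - vs).
  by rewrite /mu' /lk1 hv1 hvs mulmxBr.
have key := main_ineq hBt hBpsd hBrho hAP ha hb hbP hl hm hh hg he hmu hv.
move: key; rewrite -/delta.
set LL := (1 + alpha * rhoB) * sqnorm e + alpha / beta * sqnorm mu'.
set RR := sqnorm u + alpha / beta * sqnorm mu + alpha * rhoB * sqnorm w.
move=> key.
have hdel : 0 < delta by exact: deltac_gt0.
have hpos : 0 < 1 + delta by lra.
have -> : LL = (1 + delta)^-1 * ((1 + delta) * LL).
  by field; apply: lt0r_neq0.
apply: ler_wpM2l; first by rewrite invr_ge0 ltW.
lra.
Qed.
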